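(* Let $f_1,\dots,f_T\in\mathcal F_X(\alpha,l,G)$, and let $x_1,\dots,x_T$ be the outputs of online gradient descent with stepsize $1/l$: $$x_1=x_0,\qquad x_t=\Pi_X\big(x_{t-1}-\tfrac1l\nabla f_{t-1}(x_{t-1})\big)\ \text{ for } t\ge2.$$ Then $$\sum_{t=1}^T\|x_t-x_{t-1}\|^2\le\frac{2G}{l(1-\kappa)}\sum_{t=1}^T\|\theta_t-\theta_{t-1}\|,$$ where $\kappa=\sqrt{1-\alpha/l}$, $\theta_t=\arg\min_{x\in X}f_t(x)$ for $t\ge1$, and $\theta_0=x_0$.
   Context: $X\subseteq\mathbb R^n$ is nonempty, compact and convex, $\Pi_X$ is projection onto $X$, and $x_0\in X$. $\mathcal F_X(\alpha,l,G)$ (with $0<\alpha\le l$) is the set of differentiable $f:\mathbb R^n\to\mathbb R$ that are $\alpha$-strongly convex and $l$-smooth on $\mathbb R^n$ and satisfy $\|\nabla f(x)\|\le G$ for $x\in X$. *)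

(* Defs.v *)
From HB Require Import structures.
From mathcomp Require Import all_boot all_order all_algebra.
From mathcomp Require Import all_classical all_reals all_analysis.
Set Implicit Arguments. Unset Strict Implicit. Unset Printing Implicit Defensive.
Import Order.TTheory GRing.Theory Num.Theory.
Import numFieldNormedType.Exports.
Local Open Scope classical_set_scope.
Local Open Scope ring_scope.

Section Defs.
Context {R : realType} {n : nat}.
Local Notation vec := 'rV[R]_n.

Definition dotv (u v : vec) : R := \sum_(i < n) u ord0 i * v ord0 i.
Definition enorm (u : vec) : R := Num.sqrt (dotv u u).

Definition is_gradient (f : vec -> R) (g : vec -> vec) : Prop :=
  forall x, differentiable f x /\ forall v, 'd f x v = dotv (g x) v.

Definition strongly_convex (alpha : R) (f : vec -> R) (g : vec -> vec) : Prop :=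
  forall x y, f x + dotv (g x) (y - x) + alpha / 2 * enorm (y - x) ^+ 2 <= f y.

Definition smooth (l : R) (g : vec -> vec) : Prop :=
  forall x y, enorm (g x - g y) <= l * enorm (x - y).

Definition in_FX (X : set vec) (alpha l G : R) (f : vec -> R) (g : vec -> vec)
  : Prop :=
  [/\ is_gradient f g, strongly_convex alpha f g, smooth l g &
      forall x, X x -> enorm (g x) <= G].

Definition is_projection (X : set vec) (P : vec -> vec) : Prop :=
  forall z, X (P z) /\ forall y, X y -> enorm (z - P z) <= enorm (z - y).

Definition is_argmin (X : set vec) (f : vec -> R) (m : vec) : Prop :=
  X m /\ forall y, X y -> f m <= f y.

(* online gradient descent with stepsize 1/l:
   x_0 = x0, x_1 = x0, x_{t+2} = P (x_{t+1} - (1/l) g_{t+1}(x_{t+1})) *)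
Fixpoint ogd (P : vec -> vec) (g : nat -> vec -> vec) (l : R) (x0 : vec)
  (t : nat) : vec :=
  match t with
  | 0 => x0
  | 1 => x0
  | (s.+1) as t' =>
      let xs := ogd P g l x0 s in P (xs - l^-1 *: g s xs)
  end.
End Defs.

(* Main.v *)
Require Import Defs.
From HB Require Import structures.
From mathcomp Require Import all_boot all_order all_algebra.
From mathcomp Require Import all_classical all_reals all_analysis.
From mathcomp Require Import ring lra zify.
Import Order.TTheory GRing.Theory Num.Theory.
Import numFieldNormedType.Exports.
Local Open Scope classical_set_scope.
Local Open Scope ring_scope.
Local Open Scope convex_scope.

Section Dot.
Context {R : realType} {n : nat}.
Implicit Types u v w : 'rV[R]_n.

Lemma dotvC u v : dotv u v = dotv v u.
Proof. by apply: eq_bigr => i _; rewrite mulrC. Qed.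

Lemma dotvDl u v w : dotv (u + v) w = dotv u w + dotv v w.
Proof. by rewrite /dotv -big_split; apply: eq_bigr => i _; rewrite mxE mulrDl. Qed.

Lemma dotvZl (k : R) u w : dotv (k *: u) w = k * dotv u w.
Proof. by rewrite /dotv mulr_sumr; apply: eq_bigr => i _; rewrite mxE mulrA. Qed.

Lemma dotvNl u w : dotv (- u) w = - dotv u w.
Proof. by rewrite -scaleN1r dotvZl mulN1r. Qed.

Lemma dotvBl u v w : dotv (u - v) w = dotv u w - dotv v w.
Proof. by rewrite dotvDl dotvNl. Qed.

Lemma dotvDr u v w : dotv w (u + v) = dotv w u + dotv w v.
Proof. by rewrite !(dotvC w) dotvDl. Qed.

Lemma dotvZr (k : R) u w : dotv w (k *: u) = k * dotv w u.
Proof. by rewrite !(dotvC w) dotvZl. Qed.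

Lemma dotvNr u w : dotv w (- u) = - dotv w u.
Proof. by rewrite !(dotvC w) dotvNl. Qed.

Lemma dotvBr u v w : dotv w (u - v) = dotv w u - dotv w v.
Proof. by rewrite !(dotvC w) dotvBl. Qed.

Lemma dotv_ge0 u : 0 <= dotv u u.
Proof. by apply: sumr_ge0 => i _; rewrite -expr2 sqr_ge0. Qed.

Lemma enorm_ge0 u : 0 <= enorm u.
Proof. exact: sqrtr_ge0. Qed.

Lemma enorm2 u : enorm u ^+ 2 = dotv u u.
Proof. by rewrite sqr_sqrtr // dotv_ge0. Qed.

Lemma enormM u : enorm u * enorm u = dotv u u.
Proof. by rewrite -expr2 enorm2. Qed.

Lemma CS2 u v : dotv u v ^+ 2 <= dotv u u * dotv v v.
Proof.
set a := dotv u u; set b := dotv u v; set c := dotv v v.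
have H t : 0 <= a - 2 * t * b + t ^+ 2 * c.
  have := dotv_ge0 (u - t *: v).
  rewrite dotvBl !dotvBr !dotvZl !dotvZr (dotvC v u) -/a -/b -/c.
  by move=> h; lra.
have c0 : 0 <= c by apply: dotv_ge0.
have a0 : 0 <= a by apply: dotv_ge0.
have [cz|cp] := eqVneq c 0.
  have [bz|bn] := eqVneq b 0; first by rewrite bz cz; lra.
  have := H ((a + 1) / (2 * b)); rewrite cz.
  have -> : 2 * ((a + 1) / (2 * b)) * b = a + 1 by field; rewrite bn.
  lra.
have cpos : 0 < c by rewrite lt_def cp c0.
have := H (b / c).
have -> : a - 2 * (b / c) * b + (b / c) ^+ 2 * c = a - b ^+ 2 / c.
  by field; rewrite cp.
rewrite subr_ge0 ler_pdivrMr //.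
Qed.

Lemma CS u v : dotv u v <= enorm u * enorm v.
Proof.
have h := CS2 u v.
rewrite (le_trans (ler_norm _)) // /enorm -sqrtrM ?dotv_ge0 //.
by rewrite -sqrtr_sqr ler_sqrt // mulr_ge0 // dotv_ge0.
Qed.


Lemma dotv_expand u v (k : R) :
  dotv (u - k *: v) (u - k *: v) = dotv u u - 2 * k * dotv u v + k ^+ 2 * dotv v v.
Proof.
rewrite dotvBl !dotvBr !dotvZl !dotvZr (dotvC v u); ring.
Qed.

Lemma enormN u : enorm (- u) = enorm u.
Proof. by rewrite /enorm dotvNl dotvNr opprK. Qed.

Lemma enormB u v : enorm (u - v) = enorm (v - u).
Proof. by rewrite -enormN opprB. Qed.

Lemma enorm_le u b : 0 <= b -> dotv u u <= b ^+ 2 -> enorm u <= b.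
Proof.
move=> b0 h; rewrite /enorm -(ger0_norm b0) -sqrtr_sqr ler_sqrt //.
by rewrite sqr_ge0.
Qed.

Lemma enorm_tri u v : enorm (u + v) <= enorm u + enorm v.
Proof.
apply: enorm_le; first by rewrite addr_ge0 // enorm_ge0.
rewrite dotvDl !dotvDr (dotvC v u) -(enormM u) -(enormM v).
have := CS u v => h; rewrite expr2; lra.
Qed.

Lemma dotv_le0 (a V : R) : 0 <= V ->
  (forall s, 0 < s -> s <= 1 -> 2 * a <= s * V) -> a <= 0.
Proof.
move=> V0 H; rewrite leNgt; apply/negP => a0.
have h1 := H 1 ltr01 (lexx _).
have Vp : 0 < V by lra.
have := H (a / V); rewrite divr_gt0 // ler_pdivrMr // mul1r.
have -> : a / V * V = a by field; rewrite gt_eqF.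
move=> h; have : 2 * a <= a by apply: h; lra.
lra.
Qed.

End Dot.

Lemma proj_vi {R : realType} {n : nat} (X : set 'rV[R]_n) P :
  convex_set X -> is_projection X P ->
  forall z y, X y -> dotv (z - P z) (y - P z) <= 0.
Proof.
move=> cX hP z y Xy.
have [XPz Pmin] := hP z.
have K := dotv_le0 _ _ (dotv_ge0 (y - P z)).
apply: K => s s0 s1.
have s0' : 0 <= s by exact: ltW.
pose lam : {i01 R} := Itv01 s0' s1.
have Xq := cX y (P z) lam (mem_set Xy) (mem_set XPz).
move: Xq; set q := conv _ _ _.
have -> : q = P z + s *: (y - P z) :> 'rV[R]_n.
  rewrite /q /conv /= /unstable.onem scalerBr scalerBl scale1r.
  by rewrite addrCA.
move=> /set_mem Xq.
have := Pmin _ Xq.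
rewrite /enorm ler_sqrt ?dotv_ge0 // opprD addrA.
set e := z - P z; set v := y - P z.
rewrite dotv_expand.
set E := dotv e e.
set a := dotv e v.
set V := dotv v v.
move=> h.
have : s * (2 * a) <= s * (s * V) by lra.
by rewrite ler_pM2l.
Qed.

Lemma lip_dot {R : realType} {n : nat} (l : R) (g : 'rV[R]_n -> 'rV[R]_n) a b v :
  smooth l g -> dotv (g a - g b) v <= l * enorm (a - b) * enorm v.
Proof.
move=> hs; apply: (le_trans (CS _ _)).
by rewrite ler_wpM2r ?enorm_ge0 // hs.
Qed.

Lemma halve_lim {R : realType} (a b K : R) : 0 <= K ->
  (forall m : nat, a <= b + K / 2 ^+ m.+1) -> a <= b.
Proof.
move=> K0 H; rewrite leNgt; apply/negP => ab.
have abp : 0 < a - b by rewrite subr_gt0.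
have q0 : 0 <= K / (a - b) by rewrite divr_ge0 // ltW.
have hN := archi_boundP q0.
set N := Num.Def.archi_bound _ in hN.
have h2 : (N%:R : R) <= 2 ^+ N.+1.
  rewrite -natrX ler_nat; apply: (leq_trans (leqnSn N)); apply: ltnW; exact: ltn_expl.
have p2 : 0 < (2 : R) ^+ N.+1 by rewrite exprn_gt0.
have : K / 2 ^+ N.+1 < a - b.
  rewrite ltr_pdivrMr //.
  move: hN; rewrite ltr_pdivrMr // => hN.
  apply: (lt_le_trans hN); rewrite mulrC ler_wpM2l // ltW //.
have := H N; lra.
Qed.

Lemma descent {R : realType} {n : nat} (alpha l : R) f (g : 'rV[R]_n -> 'rV[R]_n) :
  alpha <= l -> strongly_convex alpha f g -> smooth l g ->
  forall y d, f (y + d) <= f y + dotv (g y) d + l / 2 * dotv d d.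
Proof.
move=> al hsc hs.
have lipd y d : dotv (g (y + d)) d - dotv (g y) d <= l * dotv d d.
  rewrite -dotvBl -enormM mulrA (le_trans (lip_dot _ _ _ _ _ hs)) //.
  by rewrite [y + d]addrC addrK.
have C m : forall y d, f (y + d) - f y - dotv (g y) d <=
    (l / 2 + (l - alpha) / 2 ^+ m.+1) * dotv d d.
  elim: m => [|m IH] y d.
    have := hsc (y + d) y.
    rewrite opprD addrA subrr add0r enormN enorm2 dotvNr.
    have := lipd y d; rewrite expr1.
    move=> h1 h2; lra.
  set h := 2^-1 *: d.
  have dh : d = h + h.
    by rewrite /h -scalerDl (_ : (2^-1 + 2^-1 : R) = 1) ?scale1r //; field.
  have hh : dotv h h = dotv d d / 4.
    by rewrite /h dotvZl dotvZr; field.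
  have gh : dotv (g y) h = dotv (g y) d / 2.
    by rewrite /h dotvZr; field.
  have e1 := IH (y + h) h.
  have e2 := IH y h.
  have e3 := lipd y h.
  have -> : (l - alpha) / 2 ^+ m.+2 = (l - alpha) / 2 ^+ m.+1 / 2.
    by rewrite exprS; field; rewrite expf_neq0.
  have yd : y + h + h = y + d by rewrite [in RHS]dh addrA.
  rewrite yd in e1.
  move: e1 e2 e3; rewrite hh gh.
  set e := (l - alpha) / 2 ^+ m.+1.
  move=> e1 e2 e3; lra.
move=> y d.
have N0 : 0 <= (l - alpha) * dotv d d by rewrite mulr_ge0 ?dotv_ge0 ?subr_ge0.
apply: (halve_lim _ _ _ N0) => m.
have := C m y d; rewrite mulrDl (mulrC (l - alpha)) -mulrA (mulrC _ (dotv d d)) mulrA.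
lra.
Qed.

Lemma step {R : realType} {n : nat} (X : set 'rV[R]_n) P (alpha l G : R) f g
    (th x : 'rV[R]_n) :
  convex_set X -> is_projection X P -> 0 < alpha -> alpha <= l ->
  in_FX X alpha l G f g -> is_argmin X f th ->
  dotv (P (x - l^-1 *: g x) - th) (P (x - l^-1 *: g x) - th)
    <= (1 - alpha / l) * dotv (x - th) (x - th) /\
  (X x -> enorm (P (x - l^-1 *: g x) - x) <= G / l).
Proof.
move=> cX hP a0 al [_ hsc hs hG] [Xth thmin].
have l0 : 0 < l by exact: lt_le_trans al.
set q := l^-1 *: g x.
have gq : g x = l *: q by rewrite /q scalerA mulfV ?gt_eqF // scale1r.
clearbody q.
set p := P (x - q).
have Xp : X p by case: (hP (x - q)).
split.
  have vi := proj_vi _ _ cX hP (x - q) _ Xth; rewrite -/p in vi.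
  have sc := hsc x th.
  have ds := descent _ _ _ _ al hsc hs x (p - x).
  rewrite addrC subrK in ds.
  have am := thmin _ Xp.
  rewrite enorm2 gq !dotvZl in sc ds.
  move: vi; set E := dotv _ _ => vi.
  have vi2 : l * E <= 0 by rewrite pmulr_rle0.
  move: vi2 sc ds; rewrite /E !dotvBl !dotvBr.
  have c1 := dotvC x th; have c2 := dotvC x p; have c3 := dotvC x q.
  have c4 := dotvC th p; have c5 := dotvC th q; have c6 := dotvC p q.
  move=> vi2 sc ds.
  have key : l * (dotv p p - dotv p th - dotv th p + dotv th th) <=
     (l - alpha) * (dotv x x - dotv x th - dotv th x + dotv th th).
    nra.
  rewrite -(ler_pM2l l0).
  have -> : forall B, l * ((1 - alpha / l) * B) = (l - alpha) * B.
    by move=> B; field; rewrite gt_eqF.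
  nra.
move=> Xx.
have vi := proj_vi _ _ cX hP (x - q) _ Xx; rewrite -/p in vi.
have gx0 := hG x Xx.
have cs := CS (g x) (x - p).
have e : dotv (x - q - p) (x - p) = dotv (x - p) (x - p) - dotv q (x - p).
  by rewrite addrAC [LHS]dotvBl.
rewrite e -enormM in vi.
rewrite enormB.
set r := enorm (x - p) in vi cs *.
have r0 : 0 <= r by apply: enorm_ge0.
set c := G / l.
have G0 : 0 <= G by apply: le_trans gx0; apply: enorm_ge0.
have c0 : 0 <= c by rewrite divr_ge0 // ltW.
have h1 : r * r <= c * r.
  have : dotv q (x - p) <= l^-1 * (G * r).
    have -> : dotv q (x - p) = l^-1 * dotv (g x) (x - p).
      by rewrite gq dotvZl mulrA mulVf ?gt_eqF // mul1r.
    rewrite ler_pM2l ?invr_gt0 //.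
    apply: le_trans cs _; rewrite ler_wpM2r //.
  rewrite /c mulrA [l^-1 * G]mulrC; lra.
nra.
Qed.

Lemma enorm0 {R : realType} {n : nat} : enorm (0 : 'rV[R]_n) = 0.
Proof. by rewrite /enorm /dotv big1 ?sqrtr0 // => i _; rewrite mxE mul0r. Qed.

Theorem lemma8 (R : realType) (n : nat) (X : set 'rV[R]_n)
  (alpha l G : R) (x0 : 'rV[R]_n) (T : nat)
  (f : nat -> 'rV[R]_n -> R) (g : nat -> 'rV[R]_n -> 'rV[R]_n)
  (P : 'rV[R]_n -> 'rV[R]_n) (theta : nat -> 'rV[R]_n) :
  X !=set0 -> compact X -> convex_set X ->
  is_projection X P -> X x0 ->
  0 < alpha -> alpha <= l ->
  (forall t, (1 <= t <= T)%N -> in_FX X alpha l G (f t) (g t)) ->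
  theta 0%N = x0 ->
  (forall t, (1 <= t <= T)%N -> is_argmin X (f t) (theta t)) ->
  let x := ogd P g l x0 in
  let kappa := Num.sqrt (1 - alpha / l) in
  \sum_(1 <= t < T.+1) enorm (x t - x t.-1) ^+ 2
    <= (2 * G) / (l * (1 - kappa)) *
       \sum_(1 <= t < T.+1) enorm (theta t - theta t.-1).
Proof.
move=> _ _ cX hP X0 a0 al hF th0 hA.
cbv zeta.
set x := ogd P g l x0.
set kappa := Num.sqrt (1 - alpha / l).
case: T hF hA => [|T] hF hA.
  by rewrite !big_geq // mulr0.
have l0 : 0 < l by exact: lt_le_trans al.
have q0 : 0 <= 1 - alpha / l.
  by rewrite subr_ge0 ler_pdivrMr // mul1r.
have k0 : 0 <= kappa by apply: sqrtr_ge0.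
have k2 : kappa ^+ 2 = 1 - alpha / l by rewrite sqr_sqrtr.
have k1 : kappa < 1.
  have : alpha / l > 0 by rewrite divr_gt0.
  nra.
have xS s : x s.+2 = P (x s.+1 - l^-1 *: g s.+1 (x s.+1)) by [].
have x1 : x 1%N = x0 by [].
have Xx s : X (x s).
  case: s => [|[|s]] //; rewrite xS; by case: (hP (x s.+1 - l^-1 *: g s.+1 (x s.+1))).
have G0 : 0 <= G.
  have [_ _ _ hG] := hF 1%N isT.
  exact: le_trans (enorm_ge0 _) (hG _ X0).
set c := G / l.
have c0 : 0 <= c by rewrite divr_ge0 // ltW.
have contr s : (1 <= s <= T.+1)%N ->
    enorm (x s.+1 - theta s) <= kappa * enorm (x s - theta s) /\
    enorm (x s.+1 - x s) <= c.
  case: s => [//|s] hs.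
  have [h1 h2] := step _ _ _ _ _ _ _ (theta s.+1) (x s.+1) cX hP a0 al (hF _ hs) (hA _ hs).
  rewrite xS; split; last exact: h2.
  apply: enorm_le; first by rewrite mulr_ge0 // enorm_ge0.
  by rewrite exprMn k2 enorm2.
pose a t := enorm (x t - theta t).
have a_ge0 t : 0 <= a t by apply: enorm_ge0.
have claim m : (1 <= m <= T.+1)%N ->
  (1 - kappa) * \sum_(1 <= t < m.+1) a t + kappa * a m
     <= \sum_(1 <= t < m.+1) enorm (theta t - theta t.-1) /\
  \sum_(1 <= t < m.+1) enorm (x t - x t.-1) ^+ 2
     <= 2 * c * (\sum_(1 <= t < m.+1) a t - a m).
  elim: m => [//|m IH] hm.
  case: m IH hm => [|m] IH hm.
    rewrite !big_nat1 /= /a x1 th0 subrr enorm0 enormB.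
    split; first lra.
    by rewrite expr0n /= subrr mulr0.
  have hm' : (1 <= m.+1 <= T.+1)%N by move: hm; rewrite /=; lia.
  have [IH1 IH2] := IH hm'.
  have [ct mv] := contr _ hm'.
  rewrite -/(a m.+1) in ct.
  rewrite !(big_nat_recr m.+2 1) //=.
  have tri : a m.+2 <= kappa * a m.+1 + enorm (theta m.+2 - theta m.+1).
    rewrite [a m.+2]/a (_ : x m.+2 - theta m.+2 = (x m.+2 - theta m.+1) + (theta m.+1 - theta m.+2)).
      rewrite (le_trans (enorm_tri _ _)) // (enormB (theta m.+1) (theta m.+2)); lra.
    by rewrite addrA subrK.
  have tri2 : enorm (x m.+2 - x m.+1) <= 2 * a m.+1.
    rewrite (_ : x m.+2 - x m.+1 = (x m.+2 - theta m.+1) + (theta m.+1 - x m.+1)).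
      rewrite (le_trans (enorm_tri _ _)) // (enormB (theta m.+1) (x m.+1)) -/(a m.+1).
      have : kappa * a m.+1 <= a m.+1 by rewrite ler_piMl // ltW.
      lra.
    by rewrite addrA subrK.
  have e0 := enorm_ge0 (x m.+2 - x m.+1).
  have sq : enorm (x m.+2 - x m.+1) ^+ 2 <= 2 * c * a m.+1 by nra.
  split; lra.
have [C1 C2] := claim T.+1 (leqnn _).
rewrite (le_trans C2) //.
set S := \sum_(1 <= t < T.+2) a t in C1 C2 *.
set D := \sum_(1 <= t < T.+2) enorm (theta t - theta t.-1) in C1 *.
have kp : 0 < 1 - kappa by rewrite subr_gt0.
have SD : S <= D / (1 - kappa).
  rewrite ler_pdivlMr //.
  have := a_ge0 T.+1; nra.
have -> : 2 * G / (l * (1 - kappa)) * D = 2 * c * (D / (1 - kappa)).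
  by rewrite /c; field; rewrite !gt_eqF.
have := a_ge0 T.+1.
have : 0 <= 2 * c by rewrite mulr_ge0.
nra.
Qed.
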